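(* Let $H=(\mathcal{V},\mathcal{E})$ be the hypergraph representation of $\{\mathcal{I}_j\}$. Then $H$ is connected if and only if $\mathsf{M}^\star(\{\mathcal{I}_j\})<\left|\bigcup_j\mathcal{I}_j\right|$. Moreover, $\{\mathcal{I}_j\}$ is $1$-critical if and only if $\mathcal{E}$ is a minimal connected dominating edge set of $H$.
   Context: $\{\mathcal{I}_j\}=(\mathcal{I}_1,\dots,\mathcal{I}_n)$ is a family of finite sets (message indices held by clients $c_1,\dots,c_n$). $\mathsf{M}^\star(\{\mathcal{I}_j\})$ is the optimal value of: minimize $\sum_{j\in[n]}a_j$ over $a\in\mathbb{Z}^n$ subject to $\sum_{j\in\mathcal{S}}a_j\ge\left|\bigcap_{j\in[n]\setminus\mathcal{S}}\bar{\mathcal{I}}_j\right|$ for every nonempty proper $\mathcal{S}\subsetneq[n]$, where $\bar{\mathcal{I}}_j=(\bigcup_i\mathcal{I}_i)\setminus\mathcal{I}_j$. A family $\{\mathcal{I}_j\}$ is $1$-critical if (i) $|\bigcup_j\mathcal{I}_j|-\mathsf{M}^\star(\{\mathcal{I}_j\})=1$ and (ii) $\mathsf{M}^\star(\{\mathcal{I}_j\setminus\{i\}\})=\mathsf{M}^\star(\{\mathcal{I}_j\})$ for all $i\in\bigcup_j\mathcal{I}_j$. The hypergraph representation of $\{\mathcal{I}_j\}$ is the hypergraph (repeated edges allowed) with vertex set $\mathcal{V}=\{c_1,\dots,c_n\}$ and one hyperedge for each message index $e\in\bigcup_j\mathcal{I}_j$, where $c_j\in e$ iff $e\in\mathcal{I}_j$.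 For a hypergraph $H=(\mathcal{V},\mathcal{E})$, an edge set $\mathcal{E}'\subseteq\mathcal{E}$ is a minimal connected dominating edge set if $(\mathcal{V},\mathcal{E}')$ is connected and removing any edge from $\mathcal{E}'$ makes it disconnected. *)

(* Defs.v *)
From HB Require Import structures.
From mathcomp Require Import all_boot all_order all_algebra.
From Stdlib Require Import ClassicalEpsilon.
Set Implicit Arguments. Unset Strict Implicit. Unset Printing Implicit Defensive.
Import Order.TTheory GRing.Theory Num.Theory.

(* Messages live in a finite type T; client j : 'I_n holds the set I j. *)
Section Defs.
Variables (T : finType) (n : nat).

Definition msgs (I : 'I_n -> {set T}) : {set T} := \bigcup_(j < n) I j.

Definition cmpl (I : 'I_n -> {set T}) (j : 'I_n) : {set T} := msgs I :\: I j.

Definition feasible (I : 'I_n -> {set T}) (a : 'I_n -> int) : Prop :=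
  forall S : {set 'I_n}, S != set0 -> S != setT ->
    (#|\bigcap_(j in ~: S) cmpl I j|%:Z <= \sum_(j in S) a j)%R.

Definition is_opt_value (I : 'I_n -> {set T}) (m : int) : Prop :=
  (exists a, feasible I a /\ (\sum_(j < n) a j)%R = m) /\
  (forall a, feasible I a -> (m <= \sum_(j < n) a j)%R).

(* M*({I_j}) : the optimal value (the minimum exists whenever n >= 2) *)
Definition Mstar (I : 'I_n -> {set T}) : int :=
  epsilon (inhabits 0%R) (is_opt_value I).

(* Hypergraph representation: vertices 'I_n (clients), one hyperedge per
   message e, and c_j \in e iff e \in I j.  A sub-collection of hyperedges is
   given as a set E' of messages.  (V, E') is connected iff any two vertices are
   joined by a path in which consecutive vertices share a hyperedge of E'. *)
Definition hadj (I : 'I_n -> {set T}) (E' : {set T}) : rel 'I_n :=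
  fun x y => [exists e in E', (e \in I x) && (e \in I y)].

Definition hconnected (I : 'I_n -> {set T}) (E' : {set T}) : Prop :=
  forall x y : 'I_n, connect (hadj I E') x y.

Definition min_conn_dom (I : 'I_n -> {set T}) (E' : {set T}) : Prop :=
  [/\ E' \subset msgs I, hconnected I E' &
      forall e, e \in E' -> ~ hconnected I (E' :\ e)].

Definition one_critical (I : 'I_n -> {set T}) : Prop :=
  (#|msgs I|%:Z - Mstar I = 1)%R /\
  (forall i, i \in msgs I -> Mstar (fun j => I j :\ i) = Mstar I).

End Defs.

(* Main.v *)
Require Import Defs.
From HB Require Import structures.
From mathcomp Require Import all_boot all_order all_algebra.
From mathcomp Require Import zify.
From Stdlib Require Import ClassicalEpsilon Classical.
Import Order.TTheory GRing.Theory Num.Theory.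
Local Open Scope ring_scope.
Set Implicit Arguments. Unset Strict Implicit. Unset Printing Implicit Defensive.

Lemma sumz (J : finType) (P : pred J) (F : J -> nat) :
  (\sum_(j | P j) (F j)%:Z)%R = (\sum_(j | P j) F j)%N%:Z.
Proof. by rewrite (big_morph Posz PoszD (erefl (Posz 0))). Qed.

Lemma sum_delta (J : finType) (S : {set J}) (h : J) :
  (\sum_(j in S) (if j == h then 1 else 0) : int)%R = if h \in S then 1 else 0.
Proof.
case: ifP => hS.
  rewrite (bigD1 h) //= eqxx big1 ?addr0 // => j /andP[_ /negbTE->] //.
by rewrite big1 // => j jS; case: eqP => // ejh; rewrite ejh hS in jS.
Qed.

Lemma feasible_ge0 (T : finType) (n : nat) (I : 'I_n -> {set T}) a :
  (2 <= n)%N -> feasible I a -> forall j, (0 <= a j)%R.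
Proof.
move=> n2 fa j.
have := fa [set j]; rewrite big_set1 => h; apply: le_trans (h _ _) => //.
  by apply/set0Pn; exists j; rewrite inE.
apply/negP => /eqP e; have := cards1 j; rewrite e cardsT card_ord => e1.
by rewrite e1 in n2.
Qed.

Lemma opt_exists (T : finType) (n : nat) (I : 'I_n -> {set T}) :
  (2 <= n)%N -> exists m, is_opt_value I m.
Proof.
move=> n2.
have ex : exists a, feasible I a.
  exists (fun _ => #|msgs I|%:Z) => S S0 ST.
  rewrite sumr_const -mulr_natr natz -PoszM lez_nat.
  have [j0 j0S] : exists j0, j0 \in ~: S.
    apply/set0Pn; apply: contra ST => /eqP e; by rewrite -[S]setCK e setC0.
  have h1 : (#|\bigcap_(j in ~: S) cmpl I j| <= #|msgs I|)%N.
    apply: subset_leq_card; apply: bigcap_min j0S _; exact: subsetDl.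
  apply: leq_trans h1 _; apply: leq_pmulr; by rewrite card_gt0.
apply: NNPP => nopt.
have key : forall k : nat, ~ exists a, feasible I a /\ (\sum_(j < n) a j)%R = k%:Z.
  elim/ltn_ind => k IH [a [fa sa]]; apply: nopt; exists k%:Z; split; first by exists a.
  move=> b fb; rewrite leNgt; apply/negP => lt.
  have b0 : (0 <= \sum_(j < n) b j)%R by apply: sumr_ge0 => j _; exact: feasible_ge0 fb j.
  have hlt : (absz (\sum_(j < n) b j)%R < k)%N by rewrite -ltz_nat gez0_abs.
  by apply: (IH _ hlt); exists b; split => //; rewrite gez0_abs.
case: ex => a fa; apply: (key (absz (\sum_(j < n) a j))); exists a; split => //.
rewrite gez0_abs //; apply: sumr_ge0 => j _; exact: feasible_ge0 fa j.
Qed.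

Lemma Mstar_spec (T : finType) (n : nat) (I : 'I_n -> {set T}) :
  (2 <= n)%N -> is_opt_value I (Mstar I).
Proof. by move=> n2; apply: epsilon_spec; exact: opt_exists. Qed.

Lemma Mstar_le (T : finType) (n : nat) (I : 'I_n -> {set T}) a :
  (2 <= n)%N -> feasible I a -> Mstar I <= \sum_(j < n) a j.
Proof. by move=> n2 fa; case: (Mstar_spec I n2) => _; apply. Qed.

Lemma Mstar_ge0 (T : finType) (n : nat) (I : 'I_n -> {set T}) :
  (2 <= n)%N -> 0 <= Mstar I.
Proof.
move=> n2; case: (Mstar_spec I n2) => [[a [fa <-]] _].
by apply: sumr_ge0 => j _; exact: feasible_ge0 fa j.
Qed.

Lemma Mstar_lb (T : finType) (n : nat) (I : 'I_n -> {set T}) m :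
  (2 <= n)%N -> (forall a, feasible I a -> m <= \sum_(j < n) a j) -> m <= Mstar I.
Proof. by move=> n2 h; case: (Mstar_spec I n2) => [[a [fa <-]] _]; apply: h. Qed.

Lemma msgsD1 (T : finType) (n : nat) (I : 'I_n -> {set T}) i :
  msgs (fun j => I j :\ i) = msgs I :\ i.
Proof.
apply/setP => e; rewrite /msgs !inE; apply/bigcupP/andP.
  by case=> j _; rewrite !inE => /andP[-> ej]; split => //; apply/bigcupP; exists j.
by case=> ei /bigcupP[j _ ej]; exists j => //; rewrite !inE ei.
Qed.

Lemma feasible_del (T : finType) (n : nat) (I : 'I_n -> {set T}) i a :
  feasible I a -> feasible (fun j => I j :\ i) a.
Proof.
move=> fa S S0 ST; apply: le_trans (fa S S0 ST); rewrite lez_nat.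
apply: subset_leq_card; apply/subsetP => e /bigcapP h; apply/bigcapP => j jS.
move: (h j jS); rewrite /cmpl msgsD1 !inE => /andP[nij /andP[ei eU]].
by rewrite eU andbT; apply: contra nij => ej; rewrite ei ej.
Qed.

Lemma Mstar_del (T : finType) (n : nat) (I : 'I_n -> {set T}) i :
  (2 <= n)%N -> Mstar (fun j => I j :\ i) <= Mstar I.
Proof.
move=> n2; case: (Mstar_spec I n2) => [[a [fa <-]] _].
by apply: Mstar_le => //; exact: feasible_del.
Qed.

Lemma disconn_ge (T : finType) (n : nat) (I : 'I_n -> {set T}) a :
  ~ hconnected I (msgs I) -> feasible I a -> #|msgs I|%:Z <= \sum_(j < n) a j.
Proof.
move=> nc fa.
have [x [y nxy]] : exists x y, ~ connect (hadj I (msgs I)) x y.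
  apply: NNPP => h; apply: nc => x y; apply: NNPP => h'; apply: h; by exists x, y.
set e := hadj I (msgs I) in nxy.
pose S := [set z | connect e x z].
have xS : x \in S by rewrite inE connect0.
have yS : y \notin S by rewrite inE; apply/negP.
have S0 : S != set0 by apply/set0Pn; exists x.
have ST : S != setT by apply/negP => /eqP E; move: yS; rewrite E inE.
have CS0 : ~: S != set0 by apply/set0Pn; exists y; rewrite inE.
have CST : ~: S != setT.
  by apply/negP => /eqP/setP/(_ x); rewrite in_setC xS in_setT.
have h1 := fa S S0 ST.
have h2 := fa _ CS0 CST; rewrite setCK in h2.
rewrite (bigID (mem S)) /=.

have -> : \sum_(i < n | i \notin S) a i = \sum_(i in ~: S) a i.
  by apply: eq_bigl => i; rewrite in_setC.
apply: le_trans (lerD h1 h2); rewrite -PoszD lez_nat.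
set A := \bigcap_(j in ~: S) cmpl I j; set B := \bigcap_(j in S) cmpl I j.
have sub : msgs I \subset A :|: B.
  apply/subsetP => m mU; rewrite inE.
  case: (boolP [exists w in ~: S, m \in I w]).
    case/existsP => w /andP[wS mw]; apply/orP; right; apply/bigcapP => j jS.
    rewrite /cmpl !inE mU andbT; apply/negP => mj.
    move: wS; rewrite !inE => /negP; apply; move: jS; rewrite inE => jS.
    apply: connect_trans jS _; apply: connect1; apply/existsP; exists m.
    by rewrite mU mj mw.
  move=> nw; apply/orP; left; apply/bigcapP => j jS.
  rewrite /cmpl !inE mU andbT; apply/negP => mj; apply/negP: nw; apply/negPn.
  by apply/existsP; exists j; rewrite jS mj.
apply: leq_trans (subset_leq_card sub) _; rewrite cardsU; exact: leq_subr.
Qed.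

Lemma conn_feasible (T : finType) (n : nat) (I : 'I_n -> {set T}) (r : 'I_n) :
  hconnected I (msgs I) ->
  exists a, feasible I a /\ \sum_(j < n) a j = #|msgs I|%:Z - 1.
Proof.
move=> hc.
set U := msgs I; set e := hadj I U.
pose step (X : {set 'I_n}) := X :|: [set y | [exists x in X, e x y]].
pose L k := iter k step [set r].
have Lstep : forall k x y, x \in L k -> e x y -> y \in L k.+1.
  move=> k x y xL exy; rewrite /L iterS in_setU; apply/orP; right.
  by rewrite inE; apply/existsP; exists x; rewrite xL exy.
have reach : forall j, exists k, j \in L k.
  move=> j; case/connectP: (hc r j) => p pth ->.
  have gen : forall p x k, x \in L k -> path e x p -> last x p \in L (k + size p)%N.
    elim => [|y q IH] x k xL /=; first by rewrite addn0.
    case/andP => exy pth'; rewrite addnS -addSn; apply: IH pth'; exact: Lstep xL exy.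
  exists (0 + size p)%N; apply: gen pth; by rewrite /L /= inE.
pose dist j := ex_minn (reach j).
have distL : forall j, j \in L (dist j) by move=> j; rewrite /dist; case: ex_minnP.
have distmin : forall j k, j \in L k -> (dist j <= k)%N.
  by move=> j k; rewrite /dist; case: ex_minnP => m _ h; apply: h.
have distpred : forall j, j != r -> exists x, e x j /\ (dist x < dist j)%N.
  move=> j jr; have := distL j; case E: (dist j) => [|k].
    by rewrite /L /= inE => /eqP ejr; rewrite ejr eqxx in jr.
  rewrite /L iterS in_setU => /orP[jk|].
    by have := distmin j k jk; rewrite E ltnn.
  rewrite inE => /existsP[x /andP[xk exj]]; exists x; split => //.
  exact: leq_ltn_trans (distmin x k xk) (ltnSn k).
have [d dP] : exists d : T -> 'I_n, forall m, m \in U ->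
    m \in I (d m) /\ forall j, m \in I j -> (dist (d m) <= dist j)%N.
  have H : forall m, exists j : 'I_n, m \in U ->
      m \in I j /\ forall j', m \in I j' -> (dist j <= dist j')%N.
    move=> m; case: (boolP (m \in U)) => mU; last by exists r.
    case/bigcupP: (mU) => j0 _ mj0.
    exists [arg min_(j < j0 | m \in I j) dist j] => _.
    by case: arg_minnP => // j mj hj; split => // j' mj'; exact: hj.
  exact: (fin_all_exists H).
pose c j := #|[set m in U | d m == j]|.
pose a j := (c j)%:Z - (if j == r then 1 else 0).
have sumS : forall S : {set 'I_n}, \sum_(j in S) a j =
    #|[set m in U | d m \in S]|%:Z - (if r \in S then 1 else 0).
  move=> S; rewrite /a sumrB sumz sum_delta; congr (Posz _ - _).
  rewrite -sum1_card (partition_big d (mem S)) /=; last by move=> m /setIdP[].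
  apply: eq_bigr => j jS; rewrite /c -sum1_card; apply: eq_bigl => m; rewrite !inE.
  by case: eqP => [->|]; rewrite ?jS ?andbT ?andbF.
exists a; split.
  move=> S S0 ST; rewrite sumS.
  have [j0 j0S] : exists j0, j0 \in ~: S.
    apply/set0Pn; apply: contra ST => /eqP ee; by rewrite -[S]setCK ee setC0.
  have sub : \bigcap_(j in ~: S) cmpl I j \subset [set m in U | d m \in S].
    apply/subsetP => m /bigcapP h; have := h j0 j0S; rewrite /cmpl in_setD => /andP[_ mU].
    rewrite inE mU /=; case: (dP m mU) => md _; apply: contraT => ndS.
    by have := h (d m); rewrite in_setC ndS => /(_ isT); rewrite /cmpl in_setD md.
  case: ifP => rS; last by rewrite subr0 lez_nat; exact: subset_leq_card sub.
  case: (@arg_minnP _ j0 (fun j => j \in ~: S) dist j0S) => jm jmR jmmin.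
  have jmr : jm != r by apply/eqP => E; move: jmR; rewrite E /= in_setC rS.
  case: (distpred jm jmr) => x [/existsP[m /andP[mU /andP[mx mjm]]] dx].
  case: (dP m mU) => mdm dmin.
  have dmS : d m \in S.
    apply: contraT => ndS; have := jmmin (d m); rewrite /= in_setC ndS => /(_ isT) h'.
    by have := leq_trans h' (dmin x mx); rewrite leqNgt dx.
  have : \bigcap_(j in ~: S) cmpl I j \proper [set m in U | d m \in S].
    apply/properP; split => //; exists m; first by rewrite inE mU dmS.
    by apply/bigcapP => h; have := h jm jmR; rewrite /cmpl in_setD mjm.
  move/proper_card => lt; lia.
have := sumS setT; rewrite in_setT.
have -> : [set m in U | d m \in setT] = U by apply/setP => m; rewrite !inE andbT.
move=> <-; apply: eq_bigl => j; by rewrite in_setT.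
Qed.

Lemma conn_iff (T : finType) (n : nat) (I : 'I_n -> {set T}) :
  (2 <= n)%N -> hconnected I (msgs I) <-> Mstar I < #|msgs I|%:Z.
Proof.
move=> n2; split.
  move=> hc; have n0 : (0 < n)%N by apply: ltnW.
  case: (conn_feasible (Ordinal n0) hc) => a [fa sa].
  apply: le_lt_trans (Mstar_le n2 fa) _; rewrite sa; lia.
move=> lt; apply: NNPP => nc.
have := Mstar_lb n2 (fun a fa => disconn_ge nc fa).
by rewrite leNgt lt.
Qed.

Lemma conn_del (T : finType) (n : nat) (I : 'I_n -> {set T}) i :
  hconnected I (msgs I :\ i) <-> hconnected (fun j => I j :\ i) (msgs (fun j => I j :\ i)).
Proof.
have E : hadj I (msgs I :\ i) =2 hadj (fun j => I j :\ i) (msgs (fun j => I j :\ i)).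
  move=> x y; rewrite /hadj msgsD1; apply: eq_existsb => m; rewrite !inE.
  by case: (m == i).
by split => h x y; [rewrite -(eq_connect E) | rewrite (eq_connect E)]; apply: h.
Qed.

Theorem lemma4 (T : finType) (n : nat) (I : 'I_n -> {set T}) :
  (2 <= n)%N ->
  (hconnected I (msgs I) <-> (Mstar I < #|msgs I|%:Z)%R) /\
  (one_critical I <-> min_conn_dom I (msgs I)).
Proof.
move=> n2; split; first exact: conn_iff.
split.
  case=> h1 h2; split => //.
    by apply/conn_iff => //; lia.
  move=> i iU; rewrite conn_del conn_iff // h2 // msgsD1.
  have := cardsD1 i (msgs I); rewrite iU => ci; lia.
case=> _ hc hmin.
have lt := (conn_iff I n2).1 hc.
have ge0 := Mstar_ge0 I n2.
have [i0 i0U] : exists i, i \in msgs I.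
  apply/set0Pn; rewrite -card_gt0 -ltz_nat; exact: le_lt_trans ge0 lt.
have lbd : forall i, i \in msgs I -> #|msgs I|%:Z - 1 <= Mstar (fun j => I j :\ i).
  move=> i iU; have := hmin i iU; rewrite conn_del conn_iff // msgsD1 => h.
  have := cardsD1 i (msgs I); rewrite iU => ci.
  have : ~~ (Mstar (fun j => I j :\ i) < #|msgs I :\ i|%:Z) by apply/negP.
  rewrite -leNgt; lia.
have := lbd i0 i0U; have := Mstar_del I i0 n2 => d1 d2.
have eq1 : Mstar I = #|msgs I|%:Z - 1 by lia.
split; first lia.
move=> i iU; have := lbd i iU; have := Mstar_del I i n2; lia.
Qed.
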